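(* Let $S_1,\dots,S_n\subseteq[N]$ and $k\ge1$. Let $\mathbb F$ be a field of characteristic $2$ with $|\mathbb F|\ge N$, and let $f:[N]\to\mathbb F$ be injective. For $a\in[N]$ set $\chi(a)=(1,f(a),f(a)^2,\dots,f(a)^{k-1})\in\mathbb F^k$. For $S\subseteq[N]$ let $\chi(S)=\bigwedge_{a\in S}\chi(a)\in\Lambda(\mathbb F^k)$, taken in increasing order of $a$, with $\chi(\emptyset)=1$. Let $y_1,\dots,y_n$ be indeterminates. Then there exists $T\subseteq[n]$ such that the sets $S_i$, $i\in T$, are pairwise disjoint and $\left|\bigcup_{i\in T}S_i\right|=k$ if and only if the coefficient of $e_{[k]}$ in $\prod_{i=1}^n(1+y_i\chi(S_i))$ is a nonzero polynomial in $\mathbb F[y_1,\dots,y_n]$.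
   Context: $\Lambda(\mathbb F^k)$ is the exterior algebra with basis $\{e_I:I\subseteq[k]\}$, where $e_I=e_{i_1}\wedge\cdots\wedge e_{i_r}$ for $I=\{i_1<\dots<i_r\}$. A vector $v\in\mathbb F^k$ is identified with $\sum_iv[i]e_i$. The product is taken in $\Lambda(\mathbb F^k)$ with coefficients in the polynomial ring $\mathbb F[y_1,\dots,y_n]$; in characteristic $2$ this algebra is commutative. For an element $x$, $[e_{[k]}]x$ denotes its coefficient on $e_{[k]}=e_1\wedge\cdots\wedge e_k$. *)

(* Defs.v *)
From HB Require Import structures.
From mathcomp Require Import all_boot all_order all_algebra.
From mathcomp Require Import mpoly.
Set Implicit Arguments. Unset Strict Implicit. Unset Printing Implicit Defensive.
Import Order.TTheory GRing.Theory.
Local Open Scope ring_scope.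

(* Exterior algebra Lambda(R^k) over a commutative ring R, represented by its
   coordinates on the basis e_I, I ranging over subsets of 'I_k
   (0-based indices: e_I = e_{i_1} /\ ... /\ e_{i_r}, i_1 < ... < i_r). *)
Definition ext (R : comRingType) (k : nat) := {ffun {set 'I_k} -> R}.

(* sign of e_I /\ e_J = sign * e_(I u J) for disjoint I, J: (-1)^(#inversions) *)
Definition ext_sign (R : comRingType) (k : nat) (I J : {set 'I_k}) : R :=
  (-1) ^+ #|[set p : 'I_k * 'I_k | [&& p.1 \in I, p.2 \in J & (p.2 < p.1)%N]]|.

Definition ext_mul (R : comRingType) (k : nat) (x y : ext R k) : ext R k :=
  [ffun K : {set 'I_k} =>
     \sum_(I : {set 'I_k}) \sum_(J : {set 'I_k} | [disjoint I & J] && (I :|: J == K))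
        ext_sign R I J * x I * y J].

Definition ext_one (R : comRingType) (k : nat) : ext R k :=
  [ffun I : {set 'I_k} => (I == set0)%:R].

(* a vector v in R^k identified with sum_i v[i] e_i *)
Definition ext_vec (R : comRingType) (k : nat) (v : 'I_k -> R) : ext R k :=
  [ffun I : {set 'I_k} => \sum_(i : 'I_k | I == [set i]) v i].

Definition ext_scale (R : comRingType) (k : nat) (c : R) (x : ext R k) : ext R k :=
  [ffun I => c * x I].

Definition chi_vec (F : fieldType) (N n k : nat) (f : 'I_N -> F) (a : 'I_N)
  : ext {mpoly F[n]} k :=
  ext_vec (fun j : 'I_k => ((f a) ^+ j)%:MP).

Definition chi_set (F : fieldType) (N n k : nat) (f : 'I_N -> F) (S : {set 'I_N})
  : ext {mpoly F[n]} k :=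
  foldr (fun a acc => ext_mul (chi_vec n k f a) acc) (ext_one _ k) (enum S).

Definition gen_prod (F : fieldType) (N n k : nat) (f : 'I_N -> F)
  (S : 'I_n -> {set 'I_N}) : ext {mpoly F[n]} k :=
  foldr (fun i acc => ext_mul (ext_one _ k + ext_scale 'X_i (chi_set n k f (S i))) acc)
        (ext_one _ k) (enum 'I_n).

(* Main.v *)
Require Import Defs.
From HB Require Import structures.
From mathcomp Require Import all_boot all_order all_algebra.
From mathcomp Require Import mpoly.
From mathcomp Require Import fingroup perm.
Set Implicit Arguments. Unset Strict Implicit. Unset Printing Implicit Defensive.
Import GRing.Theory.
Local Open Scope ring_scope.

Definition cx (R : comNzRingType) (k : nat) : Type := {ffun {set 'I_k} -> R}.
HB.instance Definition _ R k := GRing.Zmodule.copy (cx R k) {ffun {set 'I_k} -> R}.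

Section Conv.
Variables (R : comNzRingType) (k : nat).
Implicit Types (x y z : cx R k) (I J K L : {set 'I_k}).

Definition cmul x y : cx R k :=
  [ffun K : {set 'I_k} =>
     \sum_(I : {set 'I_k}) \sum_(J : {set 'I_k} | [disjoint I & J] && (I :|: J == K))
        x I * y J].
Definition cone : cx R k := ext_one R k.

Lemma cmulE x y K : cmul x y K = \sum_(I : {set 'I_k}) \sum_(J : {set 'I_k})
   (if [disjoint I & J] && (I :|: J == K) then x I * y J else 0).
Proof. by rewrite ffunE; apply: eq_bigr => I _; rewrite big_mkcond. Qed.

Lemma sum_pick (T : finType) (a : T) (P : pred T) (G : T -> R) :
  \sum_t (if (t == a) && P t then G t else 0) = if P a then G a else 0.
Proof.
rewrite (bigD1 a) //= eqxx /= big1 ?addr0 // => t /negPf ->; by [].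
Qed.

Lemma cmulC : commutative cmul.
Proof.
move=> x y; apply/ffunP => K; rewrite !cmulE exchange_big.
apply: eq_bigr => I _; apply: eq_bigr => J _.
by rewrite disjoint_sym setUC mulrC.
Qed.

Lemma cmul1 : left_id cone cmul.
Proof.
move=> x; apply/ffunP => K; rewrite cmulE (bigD1 set0) //=.
rewrite [X in _ + X]big1 ?addr0; last first.
  by move=> I /negPf nI; apply: big1 => J _; rewrite ffunE nI mul0r; case: ifP.
rewrite (bigD1 K) //= [X in _ + X]big1 ?addr0.
  by rewrite ffunE eqxx mul1r set0U eqxx disjoints_subset sub0set.
by move=> J /negPf nJ; rewrite set0U nJ andbF.
Qed.

Lemma cmulDl : left_distributive cmul +%R.
Proof.
move=> x y z; apply/ffunP => K; rewrite [RHS]ffunE !cmulE -big_split /=.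
apply: eq_bigr => I _; rewrite -big_split; apply: eq_bigr => J _ /=.
by rewrite ffunE mulrDl; case: ifP; rewrite ?addr0.
Qed.

Lemma disjUl (A B C : {set 'I_k}) :
  [disjoint A :|: B & C] = [disjoint A & C] && [disjoint B & C].
Proof. by rewrite -!setI_eq0 setIUl setU_eq0. Qed.
Lemma disjUr (A B C : {set 'I_k}) :
  [disjoint A & B :|: C] = [disjoint A & B] && [disjoint A & C].
Proof. by rewrite disjoint_sym disjUl ![[disjoint _ & A]]disjoint_sym. Qed.

Lemma cmulA : associative cmul.
Proof.
move=> x y z; apply/ffunP => K.
pose P I J L := [&& [disjoint I & J], [disjoint I & L], [disjoint J & L] & (I :|: J :|: L == K)].
have E1 : cmul x (cmul y z) K = \sum_(I : {set 'I_k}) \sum_(J : {set 'I_k}) \sum_(L : {set 'I_k})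
    (if P I J L then x I * y J * z L else 0).
  rewrite cmulE; apply: eq_bigr => I _.
  transitivity (\sum_(J' : {set 'I_k}) \sum_(J : {set 'I_k}) \sum_(L : {set 'I_k}) (if ([disjoint J & L] && (J :|: L == J'))
      && ([disjoint I & J'] && (I :|: J' == K)) then x I * y J * z L else 0)).
    apply: eq_bigr => J' _; case: ifP => c; last first.
      by rewrite big1 // => J _; apply: big1 => L _; rewrite andbF.
    rewrite cmulE mulr_sumr; apply: eq_bigr => J _; rewrite mulr_sumr.
    apply: eq_bigr => L _.
    by rewrite andbT; case: ifP; rewrite ?mulr0 ?mulrA.
  rewrite exchange_big; apply: eq_bigr => J _; rewrite exchange_big.
  apply: eq_bigr => L _.
  transitivity (\sum_(J' : {set 'I_k}) (if (J' == J :|: L) && ([disjoint J & L] &&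
      ([disjoint I & J'] && (I :|: J' == K))) then x I * y J * z L else 0)).
    apply: eq_bigr => J' _; congr (if _ then _ else _).
    rewrite [J :|: L == J']eq_sym.
    by case: (J' == J :|: L); rewrite /= ?andbT ?andbF.
  rewrite (sum_pick (J :|: L) (fun J' => [disjoint J & L] && ([disjoint I & J'] && (I :|: J' == K)))
     (fun _ => x I * y J * z L)) /=.
  congr (if _ then _ else _).
  rewrite /P setUA disjUr.
  by case: [disjoint I & J]; case: [disjoint I & L]; case: [disjoint J & L].
have E2 : cmul (cmul x y) z K = \sum_(I : {set 'I_k}) \sum_(J : {set 'I_k}) \sum_(L : {set 'I_k})
    (if P I J L then x I * y J * z L else 0).
  rewrite cmulE.
  transitivity (\sum_(I' : {set 'I_k}) \sum_(L : {set 'I_k}) \sum_(I : {set 'I_k}) \sum_(J : {set 'I_k})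
     (if ([disjoint I & J] && (I :|: J == I'))
      && ([disjoint I' & L] && (I' :|: L == K)) then x I * y J * z L else 0)).
    apply: eq_bigr => I' _; apply: eq_bigr => L _; case: ifP => c; last first.
      by rewrite big1 // => I _; apply: big1 => J _; rewrite andbF.
    rewrite cmulE mulr_suml; apply: eq_bigr => I _; rewrite mulr_suml.
    apply: eq_bigr => J _.
    by rewrite andbT; case: ifP; rewrite ?mul0r.
  rewrite exchange_big /=.
  transitivity (\sum_(L : {set 'I_k}) \sum_(I : {set 'I_k}) \sum_(J : {set 'I_k}) \sum_(I' : {set 'I_k})
     (if ([disjoint I & J] && (I :|: J == I'))
      && ([disjoint I' & L] && (I' :|: L == K)) then x I * y J * z L else 0)).
    apply: eq_bigr => L _; rewrite exchange_big; apply: eq_bigr => I _.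
    by rewrite exchange_big.
  rewrite exchange_big; apply: eq_bigr => I _.
  rewrite exchange_big; apply: eq_bigr => J _.
  apply: eq_bigr => L _.
  transitivity (\sum_(I' : {set 'I_k}) (if (I' == I :|: J) && ([disjoint I & J] &&
      ([disjoint I' & L] && (I' :|: L == K))) then x I * y J * z L else 0)).
    apply: eq_bigr => I' _; congr (if _ then _ else _).
    rewrite [I :|: J == I']eq_sym.
    by case: (I' == I :|: J); rewrite /= ?andbT ?andbF.
  rewrite (sum_pick (I :|: J) (fun I' => [disjoint I & J] && ([disjoint I' & L] && (I' :|: L == K)))
     (fun _ => x I * y J * z L)) /=.
  congr (if _ then _ else _).
  rewrite /P disjUl.
  by case: [disjoint I & J]; case: [disjoint I & L]; case: [disjoint J & L].
by rewrite E1 E2.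
Qed.

Lemma cone_neq0 : cone != 0.
Proof. by apply/eqP => /ffunP /(_ set0); rewrite !ffunE eqxx; apply/eqP; exact: oner_neq0. Qed.

End Conv.

HB.instance Definition _ R k := GRing.Zmodule_isComNzRing.Build (cx R k)
  (@cmulA R k) (@cmulC R k) (@cmul1 R k) (@cmulDl R k) (@cone_neq0 R k).



Section Ring.
Variables (R : comNzRingType) (k : nat).
Local Notation X := (cx R k).
Implicit Types (x y : X).

Lemma mulXE x y : x * y = cmul x y. Proof. by []. Qed.
Lemma oneXE : (1 : X) = ext_one R k. Proof. by []. Qed.

Definition ee (j : 'I_k) : X := [ffun I => (I == [set j])%:R].
Definition cst (r : R) : X := [ffun I => (I == set0)%:R * r].
Definition ind (C : {set 'I_k}) : X := [ffun I => (I == C)%:R].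

Lemma cstmulE r x I : (cst r * x) I = r * x I.
Proof.
rewrite mulXE cmulE (bigD1 set0) //=.
rewrite [X in _ + X]big1 ?addr0; last first.
  by move=> J /negPf nJ; apply: big1 => L _; rewrite ffunE nJ mul0r mul0r; case: ifP.
rewrite (bigD1 I) //= [X in _ + X]big1 ?addr0.
  by rewrite ffunE eqxx mul1r set0U eqxx disjoints_subset sub0set.
by move=> J /negPf nJ; rewrite set0U nJ andbF.
Qed.

Lemma cstM a b : cst (a * b) = cst a * cst b.
Proof. by apply/ffunP => I; rewrite cstmulE !ffunE mulrCA. Qed.
Lemma cst1 : cst 1 = 1.
Proof. by apply/ffunP => I; rewrite !ffunE mulr1. Qed.
Lemma cst_prod (I : Type) (r : seq I) (P : pred I) (F : I -> R) :
  cst (\prod_(i <- r | P i) F i) = \prod_(i <- r | P i) cst (F i).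
Proof. exact: (big_morph cst cstM cst1). Qed.

Lemma vecE (v : 'I_k -> R) : (ext_vec v : X) = \sum_j cst (v j) * ee j.
Proof.
apply/ffunP => I; rewrite sum_ffunE ffunE big_mkcond /=.
by apply: eq_bigr => j _; rewrite cstmulE ffunE; case: eqP; rewrite ?mulr1 ?mulr0.
Qed.

Lemma ee_sq j : ee j * ee j = 0.
Proof.
apply/ffunP => K; rewrite mulXE cmulE ffunE; apply: big1 => I _; apply: big1 => J _.
rewrite !ffunE; case: (I =P [set j]) => [->|]; last by rewrite mul0r; case: ifP.
case: (J =P [set j]) => [->|]; last by rewrite mulr0; case: ifP.
by rewrite disjoints1 set11.
Qed.

Lemma ee_ind j (C : {set 'I_k}) : j \notin C -> ee j * ind C = ind (j |: C).
Proof.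
move=> jC; apply/ffunP => K; rewrite mulXE cmulE [RHS]ffunE (bigD1 [set j]) //=.
rewrite [X in _ + X]big1 ?addr0; last first.
  by move=> J /negPf nJ; apply: big1 => L _; rewrite ffunE nJ mul0r; case: ifP.
rewrite (bigD1 C) //= [X in _ + X]big1 ?addr0.
  rewrite !ffunE !eqxx mulr1 disjoints1 jC /= eq_sym.
  by case: eqP.
by move=> J /negPf nJ; rewrite [ind C J]ffunE nJ mulr0; case: ifP.
Qed.

Lemma prod_ee_set (B : {set 'I_k}) : \prod_(j in B) ee j = ind B.
Proof.
move: {2}#|B| (erefl #|B|) => m; elim: m B => [|m IH] B hB.
  move/eqP: hB; rewrite cards_eq0 => /eqP ->; rewrite big_set0.
  by apply/ffunP => I; rewrite !ffunE.
have : (0 < #|B|)%N by rewrite hB.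
case/card_gt0P => j jB.
rewrite (big_setD1 j jB) /= IH; last by rewrite (cardsD1 j B) jB in hB; case: hB.
by rewrite ee_ind ?setD11 // setD1K.
Qed.

Lemma prod_ee_top : (\prod_j ee j) setT = 1.
Proof.
rewrite (eq_bigl (fun j => j \in setT)); last by move=> j; rewrite in_setT.
by rewrite prod_ee_set ffunE eqxx.
Qed.

Lemma prod_ee_ninj (g : 'I_k -> 'I_k) : ~~ injectiveb g -> \prod_t ee (g t) = 0.
Proof.
case/injectivePn => i1 [i2 ne12 eg].
rewrite (bigD1 i1) //= (bigD1 i2) /=; last by rewrite eq_sym.
by rewrite mulrA eg ee_sq mul0r.
Qed.

Section Char2.
Hypothesis h2 : (2%:R : R) = 0.

Lemma m1_1 : (-1 : R) = 1.
Proof. by apply/eqP; rewrite eq_sym -addr_eq0 -mulr2n h2. Qed.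

Lemma ext_mulE x y : ext_mul x y = x * y.
Proof.
apply/ffunP => K; rewrite mulXE cmulE ffunE; apply: eq_bigr => I _.
rewrite big_mkcond; apply: eq_bigr => J _.
by rewrite /ext_sign m1_1 expr1n mul1r.
Qed.

Lemma pchar2 : (2%N \in [pchar X]).
Proof.
apply/andP; split => //; apply/eqP/ffunP => I.
by rewrite mulr2n !ffunE -mulr2n -[_ *+ 2]mulr_natr h2 mulr0.
Qed.

Lemma vec_sq (v : 'I_k -> R) : (ext_vec v : X) * ext_vec v = 0.
Proof.
rewrite -expr2 vecE (_ : forall x : X, x ^+ 2 = pFrobenius_aut pchar2 x) // rmorph_sum.
apply: big1 => j _; change ((cst (v j) * ee j) ^+ 2 = 0).
by rewrite exprMn [ee j ^+ 2]expr2 ee_sq mulr0.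
Qed.

Lemma prod_vec_det (v : 'I_k -> 'I_k -> R) :
  (\prod_t (ext_vec (v t) : X)) setT = \det (\matrix_(t, j) v t j).
Proof.
under eq_bigr do rewrite vecE.
rewrite bigA_distr_bigA /= sum_ffunE.
under eq_bigr => g _ do rewrite big_split /= -cst_prod cstmulE.
rewrite (bigID (fun g : {ffun 'I_k -> 'I_k} => injectiveb g)) /= [X in _ + X]big1 ?addr0;
  last by move=> g /prod_ee_ninj ->; rewrite ffunE mulr0.
rewrite (reindex (@pval _)) /=; last first.
  pose in_Sn := insubd (1%g : 'S_k).
  by exists in_Sn => /= f Uf; first apply: val_inj; apply: insubdK.
rewrite /determinant; apply: eq_big => [s | s _]; first by rewrite (valP s).
have -> : \prod_t ee (pval s t) = \prod_t ee t.
  by symmetry; rewrite (reindex_perm s) /=; apply: eq_bigr => t _; rewrite pvalE.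
rewrite prod_ee_top mulr1 m1_1 expr1n mul1r.
by apply: eq_bigr => t _; rewrite mxE pvalE.
Qed.

End Char2.

Definition sized (x : X) m := forall I, x I != 0 -> #|I| = m.

Lemma sizedM x y a b : sized x a -> sized y b -> sized (x * y) (a + b).
Proof.
move=> hx hy K; rewrite mulXE cmulE => nz.
apply/eqP; apply: contraR nz => ne; apply/eqP; apply: big1 => I _; apply: big1 => J _.
case: ifP => // /andP [d /eqP e].
case: (x I =P 0) => [->|/eqP xI]; first by rewrite mul0r.
case: (y J =P 0) => [->|/eqP yJ]; first by rewrite mulr0.
exfalso; move/eqP: ne; apply.
by rewrite -e cardsU (disjoint_setI0 d) cards0 subn0 (hx _ xI) (hy _ yJ).
Qed.

Lemma sized1 : sized 1 0.
Proof. by move=> I; rewrite ffunE; case: (I =P set0) => [->|]; rewrite ?cards0 //= eqxx. Qed.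

Lemma sized_vec (v : 'I_k -> R) : sized (ext_vec v) 1.
Proof.
move=> I; rewrite ffunE => nz.
case: (pickP (fun j => I == [set j])) => [j /eqP ->|none]; first by rewrite cards1.
by move: nz; rewrite big_pred0 ?eqxx.
Qed.

Lemma sized_prod (J : Type) (r : seq J) (P : pred J) (F : J -> X) (m : J -> nat) :
  (forall i, P i -> sized (F i) (m i)) ->
  sized (\prod_(i <- r | P i) F i) (\sum_(i <- r | P i) m i)%N.
Proof.
move=> h; apply: (big_rec2 (fun x a => sized x a)); first exact: sized1.
by move=> i x a Pi hx; apply: sizedM => //; apply: h.
Qed.
End Ring.

Section Map.
Variables (R1 R2 : comNzRingType) (k : nat) (phi : {rmorphism R1 -> R2}).
Definition mapx (x : cx R1 k) : cx R2 k := [ffun I => phi (x I)].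

Lemma mapxM x y : mapx (x * y) = mapx x * mapx y.
Proof.
apply/ffunP => K; rewrite ffunE !mulXE !cmulE rmorph_sum; apply: eq_bigr => I _.
rewrite rmorph_sum; apply: eq_bigr => J _.
by case: ifP; rewrite ?rmorph0 // rmorphM !ffunE.
Qed.
Lemma mapx1 : mapx 1 = 1.
Proof. by apply/ffunP => I; rewrite !ffunE rmorph_nat. Qed.
Lemma mapx_prod (J : Type) (r : seq J) (P : pred J) (F : J -> cx R1 k) :
  mapx (\prod_(i <- r | P i) F i) = \prod_(i <- r | P i) mapx (F i).
Proof. exact: (big_morph mapx mapxM mapx1). Qed.
Lemma mapx_vec (v : 'I_k -> R1) : mapx (ext_vec v) = ext_vec (fun j => phi (v j)).
Proof. by apply/ffunP => I; rewrite !ffunE rmorph_sum. Qed.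
End Map.


Lemma vand_nz (F : fieldType) (h2 : (2%:R : F) = 0) (k : nat) (c : 'I_k -> F)
  (inj : injective c) :
  (\prod_(t : 'I_k) (ext_vec (fun j : 'I_k => c t ^+ j) : cx F k)) setT != 0.
Proof.
rewrite prod_vec_det // -det_tr.
have -> : (\matrix_(t, j) c t ^+ j)^T = Vandermonde k (\row_t c t).
  by apply/matrixP => i j; rewrite !mxE.
rewrite det_Vandermonde; apply/prodf_neq0 => i _; apply/prodf_neq0 => j ij.
rewrite !mxE subr_eq0; apply/eqP => /inj eij.
by move: ij; rewrite eij ltnn.
Qed.

Lemma prod_w_top (F : fieldType) (h2 : (2%:R : F) = 0) N k (f : 'I_N -> F)
  (injf : injective f) (A : {set 'I_N}) : #|A| = k ->
  (\prod_(a in A) (ext_vec (fun j : 'I_k => f a ^+ j) : cx F k)) setT != 0.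
Proof.
move=> hA; rewrite big_enum_val /=; subst k.
apply: (vand_nz h2 (c := fun t => f (enum_val t))).
by move=> t1 t2 /injf /enum_val_inj.
Qed.

Section Main.
Variables (F : fieldType) (N n k : nat) (S : 'I_n -> {set 'I_N}) (f : 'I_N -> F).
Hypothesis h2 : (2%:R : F) = 0.
Hypothesis injf : injective f.

Definition wF (a : 'I_N) : cx F k := ext_vec (fun j : 'I_k => f a ^+ j).
Definition PT (T : {set 'I_n}) : cx F k := \prod_(i in T) \prod_(a in S i) wF a.

Lemma PT_zero (T : {set 'I_n}) i j a : i \in T -> j \in T -> i != j -> a \in S i -> a \in S j ->
  PT T = 0.
Proof.
move=> iT jT ne ai aj; rewrite /PT (bigD1 i) //= (bigD1 j) /=; last by rewrite jT eq_sym.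
rewrite (bigD1 a ai) (bigD1 a aj) /= mulrA [X in X * _]mulrACA vec_sq //.
by rewrite !mul0r.
Qed.

Lemma PT_disj (T : {set 'I_n}) : (forall i j, i \in T -> j \in T -> i != j -> [disjoint S i & S j]) ->
  PT T = \prod_(a in \bigcup_(i in T) S i) wF a.
Proof.
rewrite /PT; move: {2}#|T| (erefl #|T|) => m; elim: m T => [|m IH] T hT hd.
  by move/eqP: hT; rewrite cards_eq0 => /eqP ->; rewrite !big_set0.
have : (0 < #|T|)%N by rewrite hT.
case/card_gt0P => i iT.
rewrite (big_setD1 i iT) /= IH; last first.
- by move=> j l /setD1P [_ jT] /setD1P [_ lT]; apply: hd.
- by rewrite (cardsD1 i T) iT in hT; case: hT.
rewrite [in RHS](big_setD1 i iT) /=.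
rewrite [RHS](eq_bigl [predU (S i) & \bigcup_(j in T :\ i) S j]); last by move=> a; rewrite !inE.
rewrite bigU //; apply: bigcup_disjoint => j; rewrite in_setD1 => /andP [ne jT].
by apply: hd; rewrite // eq_sym.
Qed.

Lemma PT_nz (T : {set 'I_n}) : PT T setT != 0 ->
  (forall i j, i \in T -> j \in T -> i != j -> [disjoint S i & S j]) /\
  #|\bigcup_(i in T) S i| = k.
Proof.
move=> nz.
have hd : forall i j, i \in T -> j \in T -> i != j -> [disjoint S i & S j].
  move=> i j iT jT ne; apply/negPn/negP; rewrite -setI_eq0 => /set0Pn [a].
  rewrite inE => /andP [ai aj].
  by move: nz; rewrite (PT_zero iT jT ne ai aj) ffunE eqxx.
split => //; move: nz; rewrite PT_disj // => nz.
have := sized_prod (r := index_enum _) (P := fun a => a \in \bigcup_(i in T) S i)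
  (F := wF) (m := fun _ => 1%N) (fun a _ => @sized_vec F k _) nz.
by rewrite sum1_card cardsT card_ord => ->.
Qed.

Lemma PT_top (T : {set 'I_n}) :
  (forall i j, i \in T -> j \in T -> i != j -> [disjoint S i & S j]) ->
  #|\bigcup_(i in T) S i| = k -> PT T setT != 0.
Proof. by move=> hd hk; rewrite PT_disj //; apply: prod_w_top. Qed.

End Main.

Lemma prod1D (R : comNzRingType) (I : finType) (A : I -> R) :
  \prod_(i : I) (1 + A i) = \sum_(g : {ffun I -> bool}) \prod_(i | g i) A i.
Proof.
rewrite (eq_bigr (fun i => \sum_(b : bool) (if b then A i else 1))); last first.
  by move=> i _; rewrite big_bool /= addrC.
rewrite bigA_distr_bigA /=; apply: eq_bigr => g _.
by rewrite [RHS]big_mkcond.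
Qed.

Section Poly.
Variables (F : fieldType) (N n k : nat) (S : 'I_n -> {set 'I_N}) (f : 'I_N -> F).
Hypothesis h2 : (2%:R : F) = 0.
Local Notation MP := {mpoly F[n]}.

Lemma h2M : (2%:R : MP) = 0.
Proof. by rewrite -mpolyC_nat h2 mpolyC0. Qed.

Lemma chi_setE (A : {set 'I_N}) :
  chi_set n k f A = mapx (@mpolyC n F) (\prod_(a in A) wF k f a).
Proof.
rewrite /chi_set -big_enum /=; elim: (enum A) => [|a l IH] /=.
  by rewrite big_nil mapx1.
rewrite big_cons mapxM -IH ext_mulE ?h2M //.
by rewrite /wF mapx_vec.
Qed.

Lemma scaleE (c : MP) (x : cx MP k) : @ext_scale _ k c x = cst k c * x.
Proof. by apply/ffunP => I; rewrite cstmulE ffunE. Qed.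

Lemma genE : (gen_prod k f S : cx MP k) =
  \prod_(i : 'I_n) (1 + cst k 'X_i * chi_set n k f (S i)).
Proof.
rewrite /gen_prod.
transitivity (\prod_(i <- enum 'I_n) (1 + cst k 'X_i * chi_set n k f (S i)) : cx MP k).
  elim: (enum 'I_n) => [|i l IH] /=; first by rewrite big_nil.
  by rewrite big_cons ext_mulE ?h2M // IH scaleE.
by rewrite big_enum /=.
Qed.

Lemma gen_setT : gen_prod k f S setT =
  \sum_(g : {ffun 'I_n -> bool}) (\prod_(i | g i) 'X_i) *
     ((\prod_(i | g i) \prod_(a in S i) wF k f a) setT)%:MP.
Proof.
have -> : gen_prod k f S setT = (gen_prod k f S : cx MP k) setT by [].
rewrite genE prod1D sum_ffunE; apply: eq_bigr => g _.
under eq_bigr do rewrite chi_setE.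
by rewrite big_split /= -cst_prod -mapx_prod cstmulE ffunE.
Qed.

End Poly.

Lemma prodX (F : fieldType) n (g : {ffun 'I_n -> bool}) :
  \prod_(i | g i) ('X_i : {mpoly F[n]}) = 'X_[(\sum_(i | g i) U_(i))%MM].
Proof.
by rewrite (big_morph (fun m => 'X_[m] : {mpoly F[n]}) (@mpolyXD n F) (mpolyX0 n F)).
Qed.

Lemma mg_inj n (g g' : {ffun 'I_n -> bool}) :
  (\sum_(i | g i) U_(i))%MM = (\sum_(i | g' i) U_(i))%MM -> g = g'.
Proof.
have E : forall (h : {ffun 'I_n -> bool}) j, (\sum_(i | h i) U_(i))%MM j = h j.
  move=> h j; rewrite mnm_sumE big_mkcond (bigD1 j) //= mnm1E eqxx big1 ?addn0.
    by case: (h j).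
  by move=> i /negPf ne; rewrite mnm1E ne; case: (h i).
move=> e; apply/ffunP => j; have := congr1 (fun m : 'X_{1..n} => m j) e.
by rewrite /= !E; case: (g j); case: (g' j).
Qed.

Theorem mainTheorem11 (F : fieldType) (N n k : nat)
  (S : 'I_n -> {set 'I_N}) (f : 'I_N -> F) :
  (0 < k)%N -> 2%N \in [pchar F] -> injective f ->
  ((exists T : {set 'I_n},
      (forall i j, i \in T -> j \in T -> i != j -> [disjoint S i & S j]) /\
      #|\bigcup_(i in T) S i| = k)
   <-> @gen_prod F N n k f S setT != 0).
Proof.
move=> k0 ch injf.
have h2 : (2%:R : F) = 0 := pcharf0 ch.
rewrite (gen_setT k S f h2).
set c := fun g : {ffun 'I_n -> bool} => (\prod_(i | g i) \prod_(a in S i) wF k f a) setT.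
have cE : forall g : {ffun 'I_n -> bool}, c g = PT k S f [set i | g i] setT.
  move=> g; rewrite /c /PT; apply: (congr1 (fun x : cx F k => x setT)).
  by apply: eq_bigl => i; rewrite inE.
split.
- case=> T [hd hk].
  pose g0 : {ffun 'I_n -> bool} := [ffun i => i \in T].
  have hc : c g0 != 0.
    rewrite cE (_ : [set i | g0 i] = T); first exact: PT_top.
    by apply/setP => i; rewrite inE ffunE.
  apply/negP => /eqP H.
  set m0 := (\sum_(i | g0 i) U_(i))%MM.
  have := congr1 (mcoeff m0) H.
  rewrite raddf_sum mcoeff0.
  rewrite (bigD1 g0) //= [X in _ + X]big1 ?addr0.
    by rewrite prodX mulrC mcoeffCM mcoeffX eqxx mulr1 => /eqP; apply/negP.
  move=> g ne; rewrite prodX mulrC mcoeffCM mcoeffX.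
  case: eqP => [/mg_inj e|]; last by rewrite mulr0.
  by rewrite e eqxx in ne.
- move=> nz.
  case: (pickP (fun g : {ffun 'I_n -> bool} => c g != 0)) => [g hg | none].
    by exists [set i | g i]; apply: (PT_nz (f := f) h2); move: hg; rewrite cE.
  exfalso; move: nz; rewrite big1 ?eqxx // => g _.
  by move/negbFE: (none g) => /eqP; rewrite /c => ->; rewrite mpolyC0 mulr0.
Qed.
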